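(* Let $\mathbf{k}$ be a field, $p\ge3$ an integer, $S=\mathbf{k}[e_1,\dots,e_{2p}]$ standard graded, and let $I$ be the ideal generated by the $3\times3$ minors of $$\begin{pmatrix} 1 & e_1 & 0 & e_2 & 0 & \cdots & e_{p-1} & 0\\ e_p & e_{p+1} & e_1 & e_{p+2} & e_2 & \cdots & e_{2p-1} & e_{p-1}\\ e_{2p} & 0 & e_{p+1} & 0 & e_{p+2} & \cdots & 0 & e_{2p-1}\end{pmatrix}.$$ Let $I'=\langle\mathrm{in}(f):f\in I\rangle$, where $\mathrm{in}(f)$ is the lowest-degree homogeneous component of $f\neq0$. Then $$I'=\mathcal{I}_2\begin{pmatrix} e_1 & e_2 & \cdots & e_{p-1}\\ e_{p+1} & e_{p+2} & \cdots & e_{2p-1}\end{pmatrix}+\langle e_{p+1},e_{p+2},\dots,e_{2p-1}\rangle^2.$$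
   Context: $\mathcal{I}_2(\cdot)$ denotes the ideal generated by the $2\times 2$ minors of a matrix. *)

(* Defs.v *)
From HB Require Import structures.
From mathcomp Require Import all_boot all_order all_algebra.
From mathcomp Require Import mpoly.
Set Implicit Arguments. Unset Strict Implicit. Unset Printing Implicit Defensive.
Import Order.TTheory GRing.Theory.
Local Open Scope ring_scope.

Section Ideals.
Variables (K : fieldType) (n : nat).
Local Notation P := {mpoly K[n]}.

Definition ideal_gen (S : P -> Prop) : P -> Prop :=
  fun h => exists (k : nat) (c g : 'I_k -> P),
    (forall i, S (g i)) /\ h = \sum_(i < k) c i * g i.

Definition ideal_add (I J : P -> Prop) : P -> Prop :=
  ideal_gen (fun h => I h \/ J h).

Definition ideal_mul (I J : P -> Prop) : P -> Prop :=
  ideal_gen (fun h => exists a b, [/\ I a, J b & h = a * b]).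

Definition ideal_eq (I J : P -> Prop) : Prop := forall h, I h <-> J h.

Definition minors_ideal (t r c : nat) (A : 'M[P]_(r, c)) : P -> Prop :=
  ideal_gen (fun h => exists (f : 'I_t -> 'I_r) (g : 'I_t -> 'I_c),
    [/\ {homo f : i j / (i < j)%N >-> (i < j)%N},
        {homo g : i j / (i < j)%N >-> (i < j)%N} &
        h = \det (mxsub f g A)]).

(* lowest degree occurring in f (meaningful for f != 0) *)
Definition lowdeg (f : P) : nat :=
  \big[minn/msize f]_(m <- msupp f) mdeg m.

Definition initf (f : P) : P := pihomog mdeg (lowdeg f) f.

Definition initial_ideal (I : P -> Prop) : P -> Prop :=
  ideal_gen (fun h => exists f, [/\ I f, f != 0 & h = initf f]).

(* the variable e_k, k = 1..n (e_k := 'X_(k-1)); 0 if k is out of range *)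
Definition e (k : nat) : P := if insub k.-1 is Some i then 'X_i else 0.

End Ideals.

(* The 3 x (2p-1) matrix of the statement, in {mpoly K[2p]}:
   column 0 is (1, e_p, e_2p); for t = 1..p-1, column 2t-1 is
   (e_t, e_{p+t}, 0) and column 2t is (0, e_t, e_{p+t}). *)
Definition Mcol (K : fieldType) (p : nat) (i : 'I_3) (j : nat) : {mpoly K[2 * p]} :=
  let e := @e K (2 * p)%N in
  if j == 0%N then
    (if val i == 0%N then 1 else if val i == 1%N then e p else e (2 * p)%N)
  else if odd j then
    (let t := j.+1./2 in
     if val i == 0%N then e t else if val i == 1%N then e (p + t)%N else 0)
  else
    (let t := j./2 in
     if val i == 0%N then 0 else if val i == 1%N then e t else e (p + t)%N).

Definition bigM (K : fieldType) (p : nat) : 'M[{mpoly K[2 * p]}]_(3, (2 * p).-1) :=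
  \matrix_(i < 3, j < (2 * p).-1) Mcol K p i j.

Definition smallN (K : fieldType) (p : nat) : 'M[{mpoly K[2 * p]}]_(2, p.-1) :=
  \matrix_(i < 2, j < p.-1)
    (if val i == 0%N then @e K (2 * p)%N j.+1 else @e K (2 * p)%N (p + j.+1)%N).

Definition linideal (K : fieldType) (p : nat) : {mpoly K[2 * p]} -> Prop :=
  ideal_gen (fun h => exists j : 'I_p.-1, h = @e K (2 * p)%N (p + j.+1)%N).

Arguments Mcol : clear implicits.
Arguments bigM : clear implicits.
Arguments smallN : clear implicits.
Arguments linideal : clear implicits.

(* Main.v *)
Require Import Defs.
From HB Require Import structures.
From mathcomp Require Import all_boot all_order all_algebra.
From mathcomp Require Import mpoly.
From mathcomp Require Import zify ring.
Set Implicit Arguments. Unset Strict Implicit. Unset Printing Implicit Defensive.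
Import Order.TTheory GRing.Theory.
Local Open Scope ring_scope.


Section Gen.
Variables (K : fieldType) (n : nat).
Local Notation P := {mpoly K[n]}.
Implicit Types (S : P -> Prop).

Definition is_ideal (I : P -> Prop) :=
  [/\ I 0, (forall a b, I a -> I b -> I (a + b)) & (forall r a, I a -> I (r * a))].

Lemma ideal_gen_ideal S : is_ideal (ideal_gen S).
Proof.
split.
- by exists 0%N, (fun _ => 0), (fun _ => 0); split => //; [case|rewrite big_ord0].
- move=> a b [k1 [c1 [g1 [H1 ->]]]] [k2 [c2 [g2 [H2 ->]]]].
  exists (k1 + k2)%N, (fun i => match split i with inl j => c1 j | inr j => c2 j end),
    (fun i => match split i with inl j => g1 j | inr j => g2 j end); split.
    by move=> i; case: (split i).

  rewrite big_split_ord /=; congr (_ + _); apply: eq_bigr => i _.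
    by rewrite -[lshift _ i]/(unsplit (inl _ i)) unsplitK.
  by rewrite -[rshift _ i]/(unsplit (inr _ i)) unsplitK.
- move=> r a [k [c [g [H ->]]]]; exists k, (fun i => r * c i), g; split => //.
  by rewrite mulr_sumr; apply: eq_bigr => i _; rewrite mulrA.
Qed.

Lemma igS S h : S h -> ideal_gen S h.
Proof.
move=> Sh; exists 1%N, (fun _ => 1), (fun _ => h); split => //.
by rewrite big_ord1 mul1r.
Qed.

Lemma ideal_min (I : P -> Prop) S : is_ideal I -> (forall h, S h -> I h) ->
  forall h, ideal_gen S h -> I h.
Proof.
move=> [I0 ID IM] HS h [k [c [g [Hg ->]]]].
elim/big_rec: _ => // i x _ Ix; apply: ID => //; apply: IM; exact: HS.
Qed.

Lemma ideal_sum (I : P -> Prop) (T : Type) (r : seq T) (F : T -> P) :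
  is_ideal I -> (forall i, I (F i)) -> I (\sum_(i <- r) F i).
Proof. by move=> [I0 ID IM] HF; elim/big_rec: _ => // i x _ Ix; apply: ID. Qed.

Lemma ideal_opp (I : P -> Prop) a : is_ideal I -> I a -> I (- a).
Proof. by move=> [I0 ID IM] Ia; rewrite -mulN1r; apply: IM. Qed.

Lemma ideal_sub (I : P -> Prop) a b : is_ideal I -> I a -> I b -> I (a - b).
Proof. by move=> HI Ia Ib; case: (HI) => _ ID _; apply: ID => //; apply: ideal_opp. Qed.

Lemma ideal_mulr (I : P -> Prop) a r : is_ideal I -> I a -> I (a * r).
Proof. by move=> [_ _ IM] Ia; rewrite mulrC; apply: IM. Qed.

End Gen.

Section Hg.
Variables (K : fieldType) (n : nat).
Local Notation P := {mpoly K[n]}.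
Implicit Types (S : P -> Prop) (f g : P).

Definition Hge e f := forall m : 'X_{1..n}, (mdeg m < e)%N -> f@_m = 0.

Lemma Hge0 e : Hge e 0.
Proof. by move=> m _; rewrite mcoeff0. Qed.

Lemma HgeD e f g : Hge e f -> Hge e g -> Hge e (f + g).
Proof. by move=> Hf Hg m lt; rewrite mcoeffD Hf ?Hg ?addr0. Qed.

Lemma HgeN e f : Hge e f -> Hge e (- f).
Proof. by move=> Hf m lt; rewrite mcoeffN Hf ?oppr0. Qed.

Lemma HgeB e f g : Hge e f -> Hge e g -> Hge e (f - g).
Proof. by move=> Hf Hg; apply: HgeD => //; apply: HgeN. Qed.

Lemma Hge_sum e (T : Type) (r : seq T) (F : T -> P) :
  (forall i, Hge e (F i)) -> Hge e (\sum_(i <- r) F i).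
Proof. by move=> HF; elim/big_rec: _ => [|i x _ Hx]; [apply: Hge0|apply: HgeD]. Qed.

Lemma Hge_le e1 e2 f : (e1 <= e2)%N -> Hge e2 f -> Hge e1 f.
Proof. by move=> le H m lt; apply: H; apply: leq_trans le. Qed.

Lemma Hge_homog d f : f \is d.-homog -> Hge d f.
Proof.
move=> /dhomogP H m lt; apply: memN_msupp_eq0; apply/negP => /H E.
by rewrite E ltnn in lt.
Qed.

Lemma HgeM e1 e2 f g : Hge e1 f -> Hge e2 g -> Hge (e1 + e2) (f * g).
Proof.
move=> Hf Hg m lt; rewrite mcoeffM big1 // => k /eqP E.
have : (mdeg k.1 + mdeg k.2 < e1 + e2)%N by rewrite -mdegD -E.
case: (ltnP (mdeg k.1) e1) => [l1|l1] lt2; first by rewrite Hf ?mul0r.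
have l2 : (mdeg k.2 < e2)%N by rewrite -(ltn_add2l (mdeg k.1)); apply: leq_trans lt2 _; rewrite leq_add2r.
by rewrite Hg ?mulr0.
Qed.

Lemma mcoeff_pihomog k f m :
  (pihomog mdeg k f)@_m = if mdeg m == k then f@_m else 0.
Proof.
have /dhomogP H := pihomogP mdeg k f.
case: eqP => [Em|Nm]; last first.
  by apply: memN_msupp_eq0; apply/negP => /H.
rewrite pihomogE raddf_sum /=.
under eq_bigr => m' _ do rewrite mcoeffZ mcoeffX.
rewrite big_mkcond /=.
case: (boolP (m \in msupp f)) => [mf|mf].
  rewrite (bigD1_seq m) //=.
  rewrite Em eqxx eqxx mulr1 big1 ?addr0 //.
  by move=> m' /negbTE ->; rewrite mulr0; case: ifP.
rewrite (memN_msupp_eq0 mf) big1_seq //.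
move=> m' /andP[_ m'in].
have Nmm : (m' == m) = false by apply/eqP => E; rewrite -E m'in in mf.
by rewrite Nmm mulr0; case: ifP.
Qed.

Lemma Hge_pihomog0 e k f : Hge e f -> (k < e)%N -> pihomog mdeg k f = 0.
Proof.
move=> Hf lt; apply/mpolyP => m; rewrite mcoeff_pihomog mcoeff0.
by case: eqP => // E; rewrite Hf // E.
Qed.

Lemma Hge_next e f : Hge e f -> Hge e.+1 (f - pihomog mdeg e f).
Proof.
move=> Hf m lt; rewrite mcoeffB mcoeff_pihomog.
case: eqP => [_|Ne]; first by rewrite subrr.
by rewrite Hf ?subr0 // ltn_neqAle -ltnS lt andbT; apply/eqP.
Qed.

Lemma homog_ideal S k g : (forall h, S h -> exists d, h \is d.-homog) ->
  ideal_gen S g -> ideal_gen S (pihomog mdeg k g).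
Proof.
move=> HS [N [c [gg [Hg ->]]]].
rewrite raddf_sum /=.
have HI := ideal_gen_ideal S.
apply: ideal_sum => // i.
have [d Hd] := HS _ (Hg i).
rewrite [c i](pihomog_partitionE (mf := mdeg) (leqnn _)) mulr_suml raddf_sum /=.
apply: ideal_sum => // j.
have Hh : pihomog mdeg j (c i) * gg i \is (j + d)%N.-homog.
  by apply: dhomogM => //; apply: pihomogP.
case: (eqVneq (j + d)%N k) => [E|N'].
  rewrite -E pihomog_dE //; case: HI => _ _ HM; apply: HM; exact: igS.
by rewrite (pihomog_ne0 N' Hh); case: HI.
Qed.

End Hg.

Section Low.
Variables (K : fieldType) (n : nat).
Local Notation P := {mpoly K[n]}.
Implicit Types (f g : P).

Lemma bigmin_le (T : eqType) (r : seq T) (F : T -> nat) z x :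
  x \in r -> (\big[minn/z]_(i <- r) F i <= F x)%N.
Proof.
elim: r => // y r IH; rewrite inE big_cons => /orP[/eqP->|xr].
  exact: geq_minl.
by rewrite geq_min IH ?orbT.
Qed.

Lemma bigmin_ge (T : eqType) (r : seq T) (F : T -> nat) z c :
  (forall x, x \in r -> c <= F x)%N -> (c <= z)%N -> (c <= \big[minn/z]_(i <- r) F i)%N.
Proof.
elim: r => [|y r IH] H cz; first by rewrite big_nil.
rewrite big_cons leq_min H ?mem_head // IH // => x xr.
by apply: H; rewrite inE xr orbT.
Qed.

Lemma Hge_lowdeg f : Hge (lowdeg f) f.
Proof.
move=> m lt; apply: memN_msupp_eq0; apply/negP => mf.
by have := @bigmin_le _ (msupp f) mdeg (msize f) m mf; rewrite -/(lowdeg f) leqNgt lt.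
Qed.

Lemma initf_split f f0 f1 d : f = f0 + f1 -> f0 \is d.-homog -> f0 != 0 ->
  Hge d.+1 f1 -> initf f = f0.
Proof.
move=> Ef H0 nz0 H1.
have Hd : Hge d f by rewrite Ef; apply: HgeD; [apply: Hge_homog | apply: Hge_le H1].
have ld : lowdeg f = d.
  apply/eqP; rewrite eqn_leq; apply/andP; split.
    have : msupp f0 != [::] by rewrite msupp_eq0.
    case E0: (msupp f0) => [|m0 s] // _.
    have m0in : m0 \in msupp f0 by rewrite E0 mem_head.
    have dm0 : mdeg m0 = d by move/dhomogP: H0 => /(_ _ m0in).
    have m0f : m0 \in msupp f.
      rewrite mcoeff_msupp Ef mcoeffD (H1 m0) ?dm0 // addr0 -mcoeff_msupp //.
    by rewrite -dm0; apply: bigmin_le.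
  have nzf : f != 0.
    apply/eqP => f0E; move: nz0; rewrite -msupp_eq0.
    case E0: (msupp f0) => [|m0 s] // _.
    have m0in : m0 \in msupp f0 by rewrite E0 mem_head.
    have dm0 : mdeg m0 = d by move/dhomogP: H0 => /(_ _ m0in).
    move: m0in; rewrite mcoeff_msupp.
    have : f@_m0 = 0 by rewrite f0E mcoeff0.
    by rewrite Ef mcoeffD (H1 m0) ?dm0 // addr0 => ->; rewrite eqxx.
  have ge : forall m, m \in msupp f -> (d <= mdeg m)%N.
    move=> m mf; rewrite leqNgt; apply/negP => lt.
    by move: mf; rewrite mcoeff_msupp Hd // eqxx.
  apply: bigmin_ge => //.
  move: nzf; rewrite -msupp_eq0; case E: (msupp f) => [|m s] // _.
  have mf : m \in msupp f by rewrite E mem_head.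
  by apply: leq_trans (ge _ mf) _; apply: ltnW; apply: msize_mdeg_lt.
rewrite /initf ld Ef pihomogD pihomog_dE // (Hge_pihomog0 H1) ?addr0 //.
Qed.

End Low.


Lemma det2f (R : comRingType) (F : nat -> nat -> R) :
  \det (\matrix_(i < 2, j < 2) F i j) = F 0 0 * F 1 1 - F 0 1 * F 1 0.
Proof.
rewrite (expand_det_row _ ord0) !big_ord_recl big_ord0 /cofactor !det_mx11 !mxE /=.
rewrite /bump /=; ring.
Qed.

Lemma det3f (R : comRingType) (F : nat -> nat -> R) :
  \det (\matrix_(i < 3, j < 3) F i j) =
    F 0 0 * (F 1 1 * F 2 2 - F 1 2 * F 2 1)
  - F 0 1 * (F 1 0 * F 2 2 - F 1 2 * F 2 0)
  + F 0 2 * (F 1 0 * F 2 1 - F 1 1 * F 2 0).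
Proof.
rewrite (expand_det_row _ ord0) !big_ord_recl big_ord0 /cofactor.
rewrite !(expand_det_row _ ord0) !big_ord_recl !big_ord0 /cofactor !det_mx11 !mxE /=.
rewrite /bump /=; ring.
Qed.


Section Spec.
Variables (K : fieldType) (p : nat).
Hypothesis hp : (3 <= p)%N.
Local Notation n := (2 * p)%N.
Local Notation P := {mpoly K[n]}.

Lemma lt0 : (0 < n)%N. Proof. lia. Qed.
Definition io (k : nat) : 'I_n := insubd (Ordinal lt0) k.
Lemma io_val k : (k < n)%N -> val (io k) = k.
Proof. by move=> lt; rewrite val_insubd lt. Qed.
Lemma io_ord (i : 'I_n) : io i = i.
Proof. by apply: val_inj; rewrite io_val. Qed.

Lemma eE k : (0 < k <= n)%N -> @e K n k = 'X_(io k.-1).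
Proof.
move=> H; rewrite /e; case: insubP => [i Hi Ei|]; last by rewrite ltnNge; lia.
by congr 'X_(_); apply: val_inj; rewrite Ei io_val //; lia.
Qed.

Definition x s : P := @e K n s.+1.
Definition y s : P := @e K n (p + s.+1).
Definition a : P := @e K n p.
Definition b : P := @e K n n.

Lemma xE s : (s < p.-1)%N -> x s = 'X_(io s).
Proof. by move=> H; rewrite /x eE //; lia. Qed.
Lemma yE s : (s < p.-1)%N -> y s = 'X_(io (p + s)).
Proof. by move=> H; rewrite /y eE; [congr 'X_(io _); lia | lia]. Qed.
Lemma aE : a = 'X_(io p.-1).
Proof. by rewrite /a eE //; lia. Qed.
Lemma bE : b = 'X_(io n.-1).
Proof. by rewrite /b eE //; lia. Qed.


Definition cb (j i : nat) : bool :=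
  if (j < p.-1)%N then (i == j) || (i == p + j)
  else if j == p.-1 then (i < p.-1)%N
  else if j == p then (p <= i < n.-1)%N
  else if j == p.+1 then i == p.-1
  else if j == p.+2 then i == n.-1
  else false.

Definition tau (m : 'X_{1..n}) : 'X_{1..n} :=
  [multinom (\sum_(i < n) cb j i * m i)%N | j < n].

Lemma tauE m j : tau m j = (\sum_(i < n) cb j i * m i)%N.
Proof. by rewrite mnmE. Qed.

Lemma tauD m1 m2 : tau (m1 + m2)%MM = (tau m1 + tau m2)%MM.
Proof.
apply/mnmP => j; rewrite mnmDE !tauE -big_split; apply: eq_bigr => i _.
by rewrite mnmDE mulnDr.
Qed.

Lemma tau0 : tau 0%MM = 0%MM.
Proof. by apply/mnmP => j; rewrite tauE mnm0E big1 // => i _; rewrite mnm0E muln0. Qed.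

Lemma tauU k j : tau U_(k)%MM j = cb j k.
Proof.
rewrite tauE (bigD1 k) //= mnm1E eqxx muln1 big1 ?addn0 // => i.
by rewrite mnm1E eq_sym => /negbTE ->; rewrite muln0.
Qed.

Lemma eq_io s (j : 'I_n) : (s < n)%N -> (io s == j) = (s == j).
Proof. by move=> lt; rewrite -(inj_eq val_inj) io_val. Qed.

Lemma tauUx s : (s < p.-1)%N -> tau U_(io s)%MM = (U_(io s) + U_(io p.-1))%MM.
Proof.
move=> lt; apply/mnmP => j; rewrite tauU mnmDE !mnm1E !eq_io ?io_val; try lia.
have := ltn_ord j; set J := nat_of_ord j => hJ; rewrite /cb.
repeat case: ifP; repeat case: eqP; try lia.
Qed.


Ltac crush := repeat case: ifP; repeat case: eqP; try lia.

Lemma tauUy s : (s < p.-1)%N -> tau U_(io (p + s))%MM = (U_(io s) + U_(io p))%MM.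
Proof.
move=> lt; apply/mnmP => j; rewrite tauU mnmDE !mnm1E !eq_io ?io_val; try lia.
have := ltn_ord j; set J := nat_of_ord j => hJ; rewrite /cb; crush.
Qed.

Lemma sum_pick (F : 'I_n -> nat) k : (\sum_(i < n) (i == k) * F i)%N = F k.
Proof.
rewrite (bigD1 k) //= eqxx mul1n big1 ?addn0 // => i /negbTE ->; by rewrite mul0n.
Qed.

Definition lam (m : 'X_{1..n}) := (\sum_(i < n) (i < p.-1)%N * m i)%N.
Definition mu (m : 'X_{1..n}) := (\sum_(i < n) (p <= i < n.-1)%N * m i)%N.

Lemma tau_w m s : (s < p.-1)%N -> tau m (io s) = (m (io s) + m (io (p + s)))%N.
Proof.
move=> lt; rewrite tauE -(sum_pick m (io s)) -(sum_pick m (io (p + s))) -big_split.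
apply: eq_bigr => i _ /=; rewrite -mulnDl; congr (_ * _)%N.
rewrite -!(inj_eq val_inj) !io_val /cb; try lia.
have := ltn_ord i; set I := nat_of_ord i => hI; crush.
Qed.

Lemma tau_l m : tau m (io p.-1) = lam m.
Proof.
rewrite tauE; apply: eq_bigr => i _; congr (_ * _)%N; rewrite /cb io_val; try lia.
have := ltn_ord i; set I := nat_of_ord i => hI; crush.
Qed.

Lemma tau_m m : tau m (io p) = mu m.
Proof.
rewrite tauE; apply: eq_bigr => i _; congr (_ * _)%N; rewrite /cb io_val; try lia.
have := ltn_ord i; set I := nat_of_ord i => hI; crush.
Qed.

Lemma tau_a m : tau m (io p.+1) = m (io p.-1).
Proof.
rewrite tauE -(sum_pick m (io p.-1)); apply: eq_bigr => i _; congr (_ * _)%N.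
rewrite -!(inj_eq val_inj) !io_val /cb; try lia.
have := ltn_ord i; set I := nat_of_ord i => hI; crush.
Qed.

Lemma tau_b m : tau m (io p.+2) = m (io n.-1).
Proof.
rewrite tauE -(sum_pick m (io n.-1)); apply: eq_bigr => i _; congr (_ * _)%N.
rewrite -!(inj_eq val_inj) !io_val /cb; try lia.
have := ltn_ord i; set I := nat_of_ord i => hI; crush.
Qed.

Lemma mdeg_tau m : mdeg m = (lam m + mu m + m (io p.-1) + m (io n.-1))%N.
Proof.
rewrite mdegE -(sum_pick m (io p.-1)) -(sum_pick m (io n.-1)) /lam /mu -!big_split.
apply: eq_bigr => i _ /=; rewrite -!mulnDl.
rewrite -!(inj_eq val_inj) !io_val; try lia.
have -> : val i = nat_of_ord i by [].
suff -> : ((i < p.-1)%N + (p <= i < n.-1)%N + (nat_of_ord i == p.-1) + (nat_of_ord i == n.-1))%N = 1%N by rewrite mul1n.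
have := ltn_ord i; move: (nat_of_ord i) => I hI.
case: (ltnP I p.-1); case: (leqP p I); case: (ltnP I n.-1); case: eqP; case: eqP => /=; lia.
Qed.

End Spec.


Section SpecE.
Variables (K : fieldType) (p : nat).
Hypothesis hp : (3 <= p)%N.
Local Notation n := (2 * p)%N.
Local Notation P := {mpoly K[n]}.
Local Notation io := (io hp).
Local Notation x := (x K p).
Local Notation y := (y K p).
Local Notation tau := (@tau p).

Definition gg s t : P := x s * y t - x t * y s.
Definition Gset (h : P) := exists s t : 'I_(p.-1), h = gg s t.
Definition G := ideal_gen Gset.
Lemma G_ideal : is_ideal G. Proof. exact: ideal_gen_ideal. Qed.

Lemma swapG (r : 'X_{1..n}) (s t : 'I_(p.-1)) :
  G ('X_[(r + U_(io s) + U_(io (p + t)))%MM] - 'X_[(r + U_(io t) + U_(io (p + s)))%MM]).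
Proof.
have -> : 'X_[(r + U_(io s) + U_(io (p + t)))%MM] - 'X_[(r + U_(io t) + U_(io (p + s)))%MM]
   = 'X_[r] * gg s t.
  by rewrite /gg !xE // !yE // !mpolyXD; ring.
case: G_ideal => _ _ HM; apply: HM; apply: igS; by exists s, t.
Qed.

Lemma tau_swap (r : 'X_{1..n}) (s t : 'I_(p.-1)) :
  tau (r + U_(io s) + U_(io (p + t)))%MM = tau (r + U_(io t) + U_(io (p + s)))%MM.
Proof.
rewrite !tauD !(tauUy hp) // !(tauUx hp) //.
apply/mnmP => j; rewrite !mnmDE; lia.
Qed.

Lemma split_mnm (m : 'X_{1..n}) i : (0 < m i)%N -> m = ((m - U_(i)) + U_(i))%MM.
Proof.
move=> h; apply/mnmP => j; rewrite mnmDE mnmBE mnm1E.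
by case: eqP => [<-|_]; lia.
Qed.

Lemma tau_cancel m1 m2 i : tau (m1 + U_(i))%MM = tau (m2 + U_(i))%MM -> tau m1 = tau m2.
Proof.
rewrite !tauD => /mnmP E; apply/mnmP => j; have := E j; rewrite !mnmDE; lia.
Qed.

Lemma split2 (m : 'X_{1..n}) i1 i2 : i1 != i2 -> (0 < m i1)%N -> (0 < m i2)%N ->
  m = (m - U_(i1) - U_(i2) + U_(i1) + U_(i2))%MM.
Proof.
move=> H h1 h2; apply/mnmP => j; rewrite !mnmDE !mnmBE !mnm1E.
case: (eqVneq i1 j) => [<-|N1].
  by rewrite eq_sym (negbTE H) /=; lia.
case: (eqVneq i2 j) => [<-|N2] /=; lia.
Qed.

Lemma lam_pos (m : 'X_{1..n}) : (0 < lam m)%N -> exists t : 'I_n, (t < p.-1)%N /\ (0 < m t)%N.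
Proof.
case: (pickP (fun t : 'I_n => (t < p.-1)%N && (0 < m t)%N)) => [t /andP[h1 h2]|H0].
  by exists t.
rewrite /lam big1 // => i _; have := H0 i; case: (i < p.-1)%N => //= /negbT.
by rewrite -leqNgt leqn0 => /eqP ->.
Qed.

Lemma mu_pos (m : 'X_{1..n}) : (0 < mu m)%N -> exists t : 'I_n, (p <= t < n.-1)%N /\ (0 < m t)%N.
Proof.
case: (pickP (fun t : 'I_n => (p <= t < n.-1)%N && (0 < m t)%N)) => [t /andP[h1 h2]|H0].
  by exists t.
rewrite /mu big1 // => i _; have := H0 i; case: (p <= i < n.-1)%N => //= /negbT.
by rewrite -leqNgt leqn0 => /eqP ->.
Qed.

Lemma lam_ge (m : 'X_{1..n}) (i : 'I_n) : (i < p.-1)%N -> (m i <= lam m)%N.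
Proof. by move=> h; rewrite /lam (bigD1 i) //= h mul1n leq_addr. Qed.
Lemma mu_ge (m : 'X_{1..n}) (i : 'I_n) : (p <= i < n.-1)%N -> (m i <= mu m)%N.
Proof. by move=> h; rewrite /mu (bigD1 i) //= h mul1n leq_addr. Qed.

Lemma mdeg0_eq (m m' : 'X_{1..n}) : mdeg m = 0%N -> tau m = tau m' -> m = m'.
Proof.
move=> h E.
have E' : mdeg m' = mdeg m.
  by rewrite !(mdeg_tau hp) -!(tau_l hp) -!(tau_m hp) -!(tau_a hp) -!(tau_b hp) E.
have m0 : m = 0%MM by apply/eqP; rewrite -mdeg_eq0; lia.
have m0' : m' = 0%MM by apply/eqP; rewrite -mdeg_eq0; lia.
by rewrite m0 m0'.
Qed.

Lemma KA N : forall m m' : 'X_{1..n}, (mdeg m <= N)%N -> tau m = tau m' ->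
  G ('X_[m] - 'X_[m']).
Proof.
have [G0 GD GM] := G_ideal.
elim: N => [|N IH] m m' hm E.
  by rewrite (mdeg0_eq _ E) ?subrr //; lia.
case: (pickP (fun i => (0 < m i)%N)) => [i hi|H0]; last first.
  rewrite (mdeg0_eq _ E) ?subrr //; apply/eqP; rewrite mdeg_eq0; apply/eqP/mnmP => j.
  by rewrite mnm0E; have := H0 j; rewrite /= lt0n => /negbT; rewrite negbK => /eqP.
set m1 := (m - U_(i))%MM.
have Em : m = (m1 + U_(i))%MM by apply: split_mnm.
have hm1 : (mdeg m1 <= N)%N by move: hm; rewrite Em mdegD mdeg1 addn1.
have case1 : forall m'' : 'X_{1..n}, (0 < m'' i)%N -> tau m'' = tau m -> G ('X_[m] - 'X_[m'']).
  move=> m'' h'' E''.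
  have Em'' := split_mnm h''.
  have Et : tau m1 = tau (m'' - U_(i))%MM.
    by apply: (@tau_cancel _ _ i); rewrite -Em -Em''.
  rewrite Em {1}Em'' !mpolyXD -mulrBl; apply: ideal_mulr => //.
  exact: IH.
have [GI0 GID GIM] := G_ideal.
have hiN := ltn_ord i.
have Etau : forall j, tau m j = tau m' j by move=> j; rewrite E.
case: (posnP (m' i)) => [m'i0 | m'ipos]; last by apply: case1.
have ioi : io i = i by apply: io_ord.
case: (ltnP i p.-1) => [ilt | ige].
  have W := Etau (io i); rewrite (tau_w hp m ilt) (tau_w hp m' ilt) ioi m'i0 in W.
  have L := Etau (io p.-1); rewrite (tau_l hp) (tau_l hp) in L.
  have [t [tlt tpos]] : exists t : 'I_n, (t < p.-1)%N /\ (0 < m' t)%N.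
    by apply: lam_pos; rewrite -L; apply: leq_trans (lam_ge m ilt).
  set s0 := Ordinal ilt; set t0 := Ordinal tlt.
  have iot : io t0 = t by apply: io_ord.
  have Em' : m' = (m' - U_(io t0) - U_(io (p + s0)) + U_(io t0) + U_(io (p + s0)))%MM.
    apply: split2; rewrite ?iot //=; last lia.
    apply/eqP => /(congr1 val); rewrite io_val /=; lia.
  set r := (m' - U_(io t0) - U_(io (p + s0)))%MM in Em'.
  have Hs := swapG r s0 t0; have Ts := tau_swap r s0 t0.
  rewrite -Em' in Hs Ts.
  have -> : 'X_[m] - 'X_[m'] = (('X_[m] - 'X_[(r + U_(io s0) + U_(io (p + t0)))%MM])
      + ('X_[(r + U_(io s0) + U_(io (p + t0)))%MM] - 'X_[m']) : P) by ring.
  apply: GID => //; apply: case1; last by rewrite Ts E.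
  by rewrite !mnmDE !mnm1E /s0 /= ioi eqxx; lia.
case: (eqVneq (nat_of_ord i) p.-1) => [iE|iN].
  have A := Etau (io p.+1); rewrite !(tau_a hp) in A.
  have : io p.-1 = i by rewrite -iE ioi.
  by move=> h; rewrite h m'i0 in A; lia.
case: (ltnP i n.-1) => [ilt2|ige2]; last first.
  have B := Etau (io p.+2); rewrite !(tau_b hp) in B.
  have : io n.-1 = i by apply: val_inj; rewrite io_val /=; lia.
  by move=> h; rewrite h m'i0 in B; lia.
have slt : (i - p < p.-1)%N by lia.
set s0 := Ordinal slt.
have ios : io (p + s0) = i by apply: val_inj; rewrite io_val /=; lia.
have W := Etau (io s0); rewrite (tau_w hp m slt) (tau_w hp m' slt) ios m'i0 in W.
have L := Etau (io p); rewrite (tau_m hp) (tau_m hp) in L.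
have iin : (p <= i < n.-1)%N by lia.
have [t [tlt tpos]] : exists t : 'I_n, (p <= t < n.-1)%N /\ (0 < m' t)%N.
  by apply: mu_pos; rewrite -L; apply: leq_trans (mu_ge m iin).
have tlt' : (t - p < p.-1)%N by lia.
set t0 := Ordinal tlt'.
have iot : io (p + t0) = t by apply: val_inj; rewrite io_val /=; lia.
have Em' : m' = (m' - U_(io s0) - U_(io (p + t0)) + U_(io s0) + U_(io (p + t0)))%MM.
  apply: split2; rewrite ?iot //=; last lia.
  apply/eqP => /(congr1 val); rewrite !io_val /=; lia.
set r := (m' - U_(io s0) - U_(io (p + t0)))%MM in Em'.
have Hs := swapG r s0 t0; have Ts := tau_swap r s0 t0.
rewrite -Em' in Hs Ts.
have -> : 'X_[m] - 'X_[m'] = (('X_[m] - 'X_[(r + U_(io t0) + U_(io (p + s0)))%MM])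
    - ('X_[m'] - 'X_[(r + U_(io t0) + U_(io (p + s0)))%MM]) : P).
  by ring.
apply: ideal_sub => //; apply: case1; last by rewrite -Ts E.
by rewrite !mnmDE !mnm1E ios eqxx; lia.
Qed.

End SpecE.


Lemma sum_partition (T1 T2 : eqType) (V : nmodType) (s : seq T1) (f : T1 -> T2) (F : T1 -> V) :
  \sum_(m <- s) F m = \sum_(t <- undup (map f s)) \sum_(m <- s | f m == t) F m.
Proof.
rewrite [RHS](eq_bigr (fun t => \sum_(m <- s) (if f m == t then F m else 0))); last first.
  by move=> t _; rewrite big_mkcond.
rewrite exchange_big /=; apply: eq_big_seq => m ms.
rewrite -big_mkcond -big_filter (eq_filter (a2 := pred1 (f m))); last by move=> t /=; rewrite eq_sym.
rewrite filter_pred1_uniq ?undup_uniq ?big_seq1 //.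
by rewrite mem_undup; apply: map_f.
Qed.

Section SpecF.
Variables (K : fieldType) (p : nat).
Hypothesis hp : (3 <= p)%N.
Local Notation n := (2 * p)%N.
Local Notation P := {mpoly K[n]}.
Local Notation io := (io hp).
Local Notation x := (x K p).
Local Notation y := (y K p).
Local Notation tau := (@tau p).
Local Notation G := (@G K p).

Definition hphi (i : 'I_n) : P := 'X_[tau U_(i)].
Definition phi (q : P) : P := mmap (@mpolyC n K) hphi q.

Lemma phi_add : additive phi. Proof. exact: mmap_is_additive. Qed.
Lemma phi_mul : multiplicative phi. Proof. exact: mmap_is_multiplicative. Qed.
HB.instance Definition _ := GRing.isAdditive.Build P P phi phi_add.
HB.instance Definition _ := GRing.isMultiplicative.Build P P phi phi_mul.

Lemma mmap1_tau m : mmap1 hphi m = 'X_[tau m].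
Proof.
rewrite /mmap1 /hphi.
under eq_bigr => i _ do rewrite mpolyXn.
rewrite -(big_morph (fun m : 'X_{1..n} => 'X_[m] : P) (@mpolyXD _ _) (mpolyX0 _ _)).
congr 'X_[_]; apply/mnmP => j; rewrite mnm_sumE tauE; apply: eq_bigr => i _.
by rewrite mulmnE tauU.
Qed.

Lemma phiX m : phi 'X_[m] = 'X_[tau m].
Proof. by rewrite /phi mmapX mmap1_tau. Qed.


Definition W s : P := 'X_(io s).
Definition Lm : P := 'X_(io p.-1).
Definition Mu : P := 'X_(io p).

Lemma phi_x s : (s < p.-1)%N -> phi (x s) = W s * Lm.
Proof. by move=> h; rewrite (xE K hp) // phiX (tauUx hp h) mpolyXD. Qed.
Lemma phi_y s : (s < p.-1)%N -> phi (y s) = W s * Mu.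
Proof. by move=> h; rewrite (yE K hp) // phiX (tauUy hp h) mpolyXD. Qed.

Lemma phi_G q : G q -> phi q = 0.
Proof.
move=> Hq.
have HI : is_ideal (fun q : P => phi q = 0).
  split; first exact: rmorph0.
    by move=> u v hu hv; rewrite raddfD /= hu hv addr0.
  by move=> r u hu; rewrite rmorphM /= hu mulr0.
apply: (ideal_min HI _ Hq) => h [s [t ->]].
rewrite /gg rmorphB /= !rmorphM /= !phi_y // !phi_x //; ring.
Qed.

Lemma phi_coef (u : P) t :
  (phi u)@_t = \sum_(m <- msupp u | tau m == t) u@_m.
Proof.
rewrite /phi /mmap raddf_sum /= [RHS]big_mkcond /=; apply: eq_bigr => m _.
rewrite mmap1_tau mcoeffCM mcoeffX; case: eqP; by rewrite ?mulr1 ?mulr0.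
Qed.

Lemma KB (u : P) : phi u = 0 -> G u.
Proof.
move=> H0.
have HG := G_ideal K p.
pose rep t := head 0%MM [seq m' <- msupp u | tau m' == t].
have reptau : forall m, m \in msupp u -> tau (rep (tau m)) = tau m.
  move=> m mu; rewrite /rep.
  have : m \in [seq m' <- msupp u | tau m' == tau m] by rewrite mem_filter eqxx.
  case E: [seq m' <- msupp u | tau m' == tau m] => [|h tl] //= _.
  have : h \in [seq m' <- msupp u | tau m' == tau m] by rewrite E mem_head.
  by rewrite mem_filter => /andP[/eqP].
rewrite [u]mpolyE.
have -> : \sum_(m <- msupp u) u@_m *: 'X_[m] =
   \sum_(m <- msupp u) u@_m *: ('X_[m] - 'X_[rep (tau m)]) +
   \sum_(m <- msupp u) u@_m *: 'X_[rep (tau m)].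
  by rewrite -big_split /=; apply: eq_bigr => m _; rewrite -scalerDr subrK.
rewrite (sum_partition _ tau (fun m => u@_m *: 'X_[rep (tau m)] : P)).
rewrite [X in _ + X]big1_seq ?addr0; last first.
  move=> t _; rewrite (eq_bigr (fun m => u@_m *: 'X_[rep t])); last first.
    by move=> m /eqP ->.
  by rewrite -scaler_suml -phi_coef H0 mcoeff0 scale0r.
rewrite big_seq big_mkcond; apply: ideal_sum => // m /=.
case: ifP => mu; last by case: HG.
rewrite -mul_mpolyC; case: HG => _ _ HM; apply: HM.
apply: (KA K hp (N := mdeg m)) => //.
by rewrite reptau.
Qed.

End SpecF.


Section SpecG.
Variables (K : fieldType) (p : nat).
Hypothesis hp : (3 <= p)%N.
Local Notation n := (2 * p)%N.
Local Notation P := {mpoly K[n]}.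
Local Notation io := (io hp).
Local Notation x := (x K p).
Local Notation y := (y K p).
Local Notation a := (a K p).
Local Notation b := (b K p).
Local Notation tau := (@tau p).
Local Notation G := (@G K p).
Local Notation phi := (@phi K p).
Local Notation I := 'I_(p.-1).

Definition kk (s t : nat) : P := - (a * x s * y t) + b * x s * x t.
Definition hh (s t : nat) : P := y s * y t + kk s t.

Lemma mpolyX_neq0 (m : 'X_{1..n}) : ('X_[m] : P) != 0.
Proof.
apply/eqP => /(congr1 (mcoeff m)); rewrite mcoeffX eqxx mcoeff0 => /eqP.
by rewrite oner_eq0.
Qed.

Lemma K1 (d : I -> I -> P) :
  G (\sum_(s : I) \sum_(t : I) d s t * (y s * y t)) ->
  G (\sum_(s : I) \sum_(t : I) d s t * kk s t).
Proof.
move=> /(phi_G hp) H.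
set Om := \sum_(s : I) \sum_(t : I) phi (d s t) * (W K hp s * W K hp t).
have E1 : phi (\sum_(s : I) \sum_(t : I) d s t * (y s * y t)) = (Mu K hp ^+ 2) * Om.
  rewrite rmorph_sum mulr_sumr; apply: eq_bigr => s _.
  rewrite rmorph_sum mulr_sumr; apply: eq_bigr => t _.
  by rewrite !rmorphM /= !(phi_y K hp) //; ring.
have Om0 : Om = 0.
  move: H; rewrite E1 => /eqP; rewrite mulf_eq0 expf_eq0 /= (negbTE (mpolyX_neq0 _)).
  by move=> /eqP.
apply: (KB hp).
have -> : phi (\sum_(s : I) \sum_(t : I) d s t * kk s t) =
   (- (phi a * Lm K hp * Mu K hp) + phi b * Lm K hp ^+ 2) * Om.
  rewrite mulr_sumr rmorph_sum; apply: eq_bigr => s _.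
  rewrite mulr_sumr rmorph_sum; apply: eq_bigr => t _.
  rewrite /kk !rmorphM /= !rmorphD /= !rmorphN /= !rmorphM /=.
  by rewrite !(phi_y K hp (ltn_ord _)) !(phi_x K hp (ltn_ord s)) !(phi_x K hp (ltn_ord t)); ring.
by rewrite Om0 mulr0.
Qed.


Lemma e_homog k : @e K n k \is 1.-homog.
Proof.
rewrite /e; case: insub => [i|]; last exact: dhomog0.
by rewrite dhomogX; apply/eqP; apply: mdeg1.
Qed.

Lemma x_homog s : x s \is 1.-homog. Proof. exact: e_homog. Qed.
Lemma y_homog s : y s \is 1.-homog. Proof. exact: e_homog. Qed.
Lemma a_homog : a \is 1.-homog. Proof. exact: e_homog. Qed.
Lemma b_homog : b \is 1.-homog. Proof. exact: e_homog. Qed.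

Lemma yy_homog s t : y s * y t \is 2.-homog.
Proof. exact: (dhomogM (y_homog s) (y_homog t)). Qed.

Lemma gg_homog s t : gg K p s t \is 2.-homog.
Proof. by rewrite /gg rpredB // (dhomogM (x_homog _) (y_homog _)). Qed.

Lemma Hge1 (q : P) : q \is 1.-homog -> Hge 1 q.
Proof. exact: Hge_homog. Qed.

Lemma kk_Hge s t : Hge 3 (kk s t).
Proof.
apply: HgeD; first apply: HgeN.
  by apply: (HgeM (e1 := 2)); [apply: (HgeM (e1 := 1)) |]; apply: Hge1;
   rewrite ?a_homog ?x_homog ?y_homog.
by apply: (HgeM (e1 := 2)); [apply: (HgeM (e1 := 1)) |]; apply: Hge1;
   rewrite ?b_homog ?x_homog ?y_homog.
Qed.

Lemma hh_Hge s t : Hge 2 (hh s t).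
Proof.
apply: HgeD; first by apply: Hge_homog; apply: yy_homog.
by apply: Hge_le (kk_Hge s t).
Qed.

Definition YY (h : P) := exists s t : I, h = y s * y t.
Definition J0 := ideal_gen (fun h : P => @Gset K p h \/ YY h).
Lemma J0_ideal : is_ideal J0. Proof. exact: ideal_gen_ideal. Qed.

Lemma G_J0 g : G g -> J0 g.
Proof.
move=> Hg; apply: (ideal_min J0_ideal _ Hg) => h Hh; apply: igS; by left.
Qed.

Lemma G_homog k g : G g -> G (pihomog mdeg k g).
Proof.
apply: homog_ideal => h [s [t ->]]; exists 2%N; exact: gg_homog.
Qed.

Lemma YY_J0 (d : I -> I -> P) : J0 (\sum_(s : I) \sum_(t : I) d s t * (y s * y t)).
Proof.
have [J00 J0D J0M] := J0_ideal.
apply: ideal_sum => // s; apply: ideal_sum => // t; apply: J0M.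
apply: igS; right; by exists s, t.
Qed.

Definition SS (d : I -> I -> P) (F : nat -> nat -> P) := \sum_(s : I) \sum_(t : I) d s t * F s t.

Lemma decomp e (d : I -> I -> P) :
  let dl := fun s t => pihomog mdeg e (d s t) in
  SS d hh = SS dl (fun s t => y s * y t) + (SS dl kk + SS (fun s t => d s t - dl s t) hh).
Proof.
move=> dl; rewrite /SS -!big_split /=; apply: eq_bigr => s _.
rewrite -!big_split /=; apply: eq_bigr => t _; rewrite /hh; ring.
Qed.

Lemma SSyy_homog e (d : I -> I -> P) :
  SS (fun s t => pihomog mdeg e (d s t)) (fun s t => y s * y t) \is (e + 2)%N.-homog.
Proof.
apply: rpred_sum => s _; apply: rpred_sum => t _.
apply: dhomogM; [exact: pihomogP | exact: yy_homog].
Qed.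

Lemma R_Hge e (d : I -> I -> P) : (forall s t, Hge e (d s t)) ->
  Hge e.+3 (SS (fun s t => pihomog mdeg e (d s t)) kk +
            SS (fun s t => d s t - pihomog mdeg e (d s t)) hh).
Proof.
move=> Hd; apply: HgeD; apply: Hge_sum => s; apply: Hge_sum => t.
  rewrite -addn3; apply: HgeM; last exact: kk_Hge.
  by apply: Hge_homog; apply: pihomogP.
have -> : e.+3 = (e.+1 + 2)%N by rewrite addn2.
apply: HgeM; last exact: hh_Hge.
exact: Hge_next.
Qed.

Lemma stepA (f g : P) e (d : I -> I -> P) : G g -> (forall s t, Hge e (d s t)) ->
  f = g + SS d hh -> (lowdeg f <= e.+2)%N -> J0 (initf f).
Proof.
move=> Gg Hd Ef le.
have [J00 J0D J0M] := J0_ideal.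
rewrite /initf {2}Ef (decomp e) pihomogD pihomogD.
rewrite (Hge_pihomog0 (R_Hge Hd)); last lia.
rewrite addr0; apply: J0D; first by apply: G_J0; apply: G_homog.
case: (eqVneq (e + 2)%N (lowdeg f)) => [<-|ne].
  rewrite pihomog_dE; [exact: YY_J0 | exact: SSyy_homog].
by rewrite (pihomog_ne0 ne (SSyy_homog e d)).
Qed.

Lemma stepB (f g : P) e (d : I -> I -> P) : G g -> (forall s t, Hge e (d s t)) ->
  f = g + SS d hh -> (e.+2 < lowdeg f)%N ->
  exists g' d', [/\ G g', (forall s t, Hge e.+1 (d' s t)) & f = g' + SS d' hh].
Proof.
move=> Gg Hd Ef lt.
case: (G_ideal K p) => G0 GD GM.
set dl := fun s t => pihomog mdeg e (d s t).
have Z : pihomog mdeg e.+2 f = 0 by exact: (Hge_pihomog0 (@Hge_lowdeg _ _ f) lt).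
move: Z; rewrite {1}Ef (decomp e) pihomogD pihomogD (Hge_pihomog0 (R_Hge Hd)) // addr0.
have HS : SS dl (fun s t => y s * y t) \is e.+2.-homog by have := SSyy_homog e d; rewrite addn2.
rewrite (pihomog_dE HS).
move=> /eqP; rewrite addrC addr_eq0 => /eqP Eyy.
have Gyy : G (SS dl (fun s t => y s * y t)).
  by rewrite Eyy; apply: (ideal_opp (G_ideal K p)); apply: G_homog.
have Gkk : G (SS dl kk) by apply: K1.
exists (g + SS dl (fun s t => y s * y t) + SS dl kk), (fun s t => d s t - dl s t).
split => //; first exact: (GD _ _ (GD _ _ Gg Gyy) Gkk).
  by move=> s t; apply: Hge_next.
by rewrite {1}Ef (decomp e) !addrA.
Qed.

Lemma main_rep (f g : P) (d : I -> I -> P) : G g -> f = g + SS d hh -> J0 (initf f).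
Proof.
move=> Gg Ef.
suff : forall k e g d, (lowdeg f < e + k)%N -> G g -> (forall s t, Hge e (d s t)) ->
    f = g + SS d hh -> J0 (initf f).
  move=> /(_ (lowdeg f).+1 0%N g d) H; apply: H => //; try lia.
elim => [|k IH] e g' d' hk Gg' Hd' Ef'.
  by apply: (stepA Gg' Hd' Ef'); lia.
case: (leqP (lowdeg f) e.+2) => le; first exact: (stepA Gg' Hd' Ef').
have [g'' [d'' [G'' H'' E'']]] := stepB Gg' Hd' Ef' le.
apply: (IH e.+1 g'' d'') => //; lia.
Qed.

End SpecG.


Section SpecI.
Variables (K : fieldType) (p : nat).
Hypothesis hp : (3 <= p)%N.
Local Notation n := (2 * p)%N.
Local Notation P := {mpoly K[n]}.
Local Notation io := (io hp).
Local Notation x := (x K p).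
Local Notation y := (y K p).
Local Notation a := (a K p).
Local Notation b := (b K p).
Local Notation G := (@G K p).
Local Notation I := 'I_(p.-1).
Local Notation hh := (hh K p).
Local Notation SS := (@SS K p).

Definition rr (i j : nat) : P := Mcol K p (inord i) j.
Definition r j := rr 0 j.
Definition N1 j := rr 1 j - a * r j.
Definition N2 j := rr 2 j - b * r j.
Definition MM j k := N1 j * N2 k - N1 k * N2 j.

Lemma mcol0 : [/\ r 0 = 1, N1 0 = 0 & N2 0 = 0].
Proof.
rewrite /N1 /N2 /r /rr /Mcol /= !inordK //=.
by split; rewrite // mulr1 subrr.
Qed.

Lemma colodd s : [/\ r (s.*2).+1 = x s, N1 (s.*2).+1 = y s - a * x s & N2 (s.*2).+1 = - (b * x s)].
Proof.
rewrite /N1 /N2 /r /rr /Mcol /= !inordK //= odd_double /= ?doubleK ?uphalf_double.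
by split; rewrite // ?sub0r ?subr0 ?mulr0.
Qed.

Lemma coleven s : [/\ r (s.*2).+2 = 0, N1 (s.*2).+2 = x s & N2 (s.*2).+2 = y s].
Proof.
rewrite /N1 /N2 /r /rr /Mcol /= !inordK //= odd_double /= ?doubleK ?uphalf_double.
by split; rewrite // mulr0 subr0.
Qed.


Lemma col_cases j : (j < n.-1)%N ->
  [\/ j = 0%N, exists s : I, j = (s.*2).+1 | exists s : I, j = (s.*2).+2].
Proof.
move=> lt; case: (posnP j) => [->|jp]; first by constructor 1.
have E := odd_double_half j.
move: E; set h := j./2; rewrite -mul2n => E.
case: (boolP (odd j)) => oj; [rewrite oj /= in E | rewrite (negbTE oj) /= in E].
  have slt : (h < p.-1)%N by lia.
  by constructor 2; exists (Ordinal slt); rewrite /= -mul2n; lia.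
have slt : (h.-1 < p.-1)%N by lia.
by constructor 3; exists (Ordinal slt); rewrite /= -mul2n; lia.
Qed.


Definition RepP (f : P) := exists g (d : I -> I -> P), G g /\ f = g + SS d hh.

Lemma SSD (d1 d2 : I -> I -> P) F : SS (fun s t => d1 s t + d2 s t) F = SS d1 F + SS d2 F.
Proof.
rewrite /SS -big_split; apply: eq_bigr => s _; rewrite -big_split; apply: eq_bigr => t _.
by rewrite mulrDl.
Qed.

Lemma SSM c (d : I -> I -> P) F : SS (fun s t => c * d s t) F = c * SS d F.
Proof.
rewrite /SS mulr_sumr; apply: eq_bigr => s _; rewrite mulr_sumr; apply: eq_bigr => t _.
by rewrite mulrA.
Qed.

Lemma SS0 F : SS (fun _ _ => 0) F = 0.
Proof. by rewrite /SS big1 // => s _; rewrite big1 // => t _; rewrite mul0r. Qed.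

Lemma RepP_ideal : is_ideal RepP.
Proof.
case: (G_ideal K p) => G0 GD GM.
split.
- by exists 0, (fun _ _ => 0); rewrite SS0 addr0.
- move=> u v [g1 [d1 [H1 ->]]] [g2 [d2 [H2 ->]]].
  exists (g1 + g2), (fun s t => d1 s t + d2 s t); split; first exact: GD.
  by rewrite SSD; ring.
- move=> c u [g1 [d1 [H1 ->]]]; exists (c * g1), (fun s t => c * d1 s t); split.
    exact: GM.
  by rewrite SSM mulrDr.
Qed.

Lemma RepP_G g : G g -> RepP g.
Proof. by move=> Hg; exists g, (fun _ _ => 0); rewrite SS0 addr0. Qed.

Lemma RepP_gg (s t : I) : RepP (gg K p s t).
Proof. by apply: RepP_G; apply: igS; exists s, t. Qed.

Lemma RepP_hh (s t : I) : RepP (hh s t).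
Proof.
exists 0, (fun s' t' => ((s' == s) && (t' == t))%:R); split; first by case: (G_ideal K p).
rewrite add0r /SS (bigD1 s) //= (bigD1 t) //= !eqxx mul1r.
rewrite big1 ?addr0; last by move=> t' /negbTE ->; rewrite mul0r.
rewrite big1 ?addr0 // => s' /negbTE ->; rewrite big1 // => t' _; by rewrite mul0r.
Qed.

Lemma MM_rep j k : (j < n.-1)%N -> (k < n.-1)%N -> RepP (MM j k).
Proof.
have [R0 RD RM] := RepP_ideal.
move=> /col_cases [->|[s ->]|[s ->]] /col_cases [->|[t ->]|[t ->]];
  rewrite /MM; do ?[case: mcol0 => _ -> ->]; rewrite ?mul0r ?mulr0 ?subrr //.
- case: (colodd s) => _ -> ->; case: (colodd t) => _ -> ->.
  have -> : (y s - a * x s) * - (b * x t) - (y t - a * x t) * - (b * x s) = b * gg K p s t.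
    by rewrite /gg; ring.
  by apply: RM; apply: RepP_gg.
- case: (colodd s) => _ -> ->; case: (coleven t) => _ -> ->.
  have -> : (y s - a * x s) * y t - x t * - (b * x s) = hh s t.
    by rewrite /hh /kk; ring.
  by apply: RepP_hh.
- case: (coleven s) => _ -> ->; case: (colodd t) => _ -> ->.
  have -> : x s * - (b * x t) - (y t - a * x t) * y s = (-1) * hh t s.
    by rewrite /hh /kk; ring.
  by apply: RM; apply: RepP_hh.
- case: (coleven s) => _ -> ->; case: (coleven t) => _ -> ->.
  exact: RepP_gg.
Qed.


Lemma homo3 (f : 'I_3 -> 'I_3) : {homo f : i j / (i < j)%N >-> (i < j)%N} -> forall i, f i = i.
Proof.
move=> hf.
have H01 : (f (inord 0) < f (inord 1))%N by apply: hf; rewrite !inordK.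
have H12 : (f (inord 1) < f (inord 2))%N by apply: hf; rewrite !inordK.
have H2 := ltn_ord (f (inord 2)).
move=> i; apply: val_inj; rewrite -(inord_val i).
case: i => [[|[|[|k]]] hi] //=; rewrite ?inordK //; lia.
Qed.

Lemma det_minor3 (f : 'I_3 -> 'I_3) (g : 'I_3 -> 'I_(n.-1)) :
  {homo f : i j / (i < j)%N >-> (i < j)%N} ->
  let c k := nat_of_ord (g (inord k)) in
  \det (mxsub f g (bigM K p)) = r (c 0%N) * MM (c 1%N) (c 2%N) - r (c 1%N) * MM (c 0%N) (c 2%N)
     + r (c 2%N) * MM (c 0%N) (c 1%N).
Proof.
move=> hf c.
have -> : mxsub f g (bigM K p) = \matrix_(i < 3, j < 3) rr i (c j).
  by apply/matrixP => i j; rewrite !mxE (homo3 hf) /rr /c !inord_val.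
rewrite (det3f (fun i j => rr i (c j))) /MM /N1 /N2 /r; ring.
Qed.

Lemma minor3_rep (f : 'I_3 -> 'I_3) (g : 'I_3 -> 'I_(n.-1)) :
  {homo f : i j / (i < j)%N >-> (i < j)%N} -> RepP (\det (mxsub f g (bigM K p))).
Proof.
move=> hf; rewrite (det_minor3 g hf).
have [R0 RD RM] := RepP_ideal.
apply: (RD); first apply: (RD); try (apply: (RM); apply: MM_rep; exact: ltn_ord).
rewrite -mulNr; apply: (RM); apply: MM_rep; exact: ltn_ord.
Qed.

Lemma LHS_rep h : minors_ideal 3 (bigM K p) h -> RepP h.
Proof.
apply: (ideal_min RepP_ideal) => q [f [g [hf hg ->]]]; exact: minor3_rep.
Qed.

End SpecI.


Section SpecJ.
Variables (K : fieldType) (p : nat).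
Hypothesis hp : (3 <= p)%N.
Local Notation n := (2 * p)%N.
Local Notation P := {mpoly K[n]}.
Local Notation io := (io hp).
Local Notation x := (x K p).
Local Notation y := (y K p).
Local Notation a := (a K p).
Local Notation b := (b K p).
Local Notation G := (@G K p).
Local Notation I := 'I_(p.-1).
Local Notation hh := (hh K p).
Local Notation gg := (gg K p).
Local Notation MM := (MM K p).
Local Notation J0 := (@J0 K p).

Definition LHS := initial_ideal (minors_ideal 3 (bigM K p)).
Definition RHS := ideal_add (minors_ideal 2 (smallN K p))
               (ideal_mul (linideal K p) (linideal K p)).

Lemma RHS_ideal : is_ideal RHS. Proof. exact: ideal_gen_ideal. Qed.
Lemma LHS_ideal : is_ideal LHS. Proof. exact: ideal_gen_ideal. Qed.

Lemma homo2 (f : 'I_2 -> 'I_2) : {homo f : i j / (i < j)%N >-> (i < j)%N} -> forall i, f i = i.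
Proof.
move=> hf.
have H01 : (f (inord 0) < f (inord 1))%N by apply: hf; rewrite !inordK.
have H2 := ltn_ord (f (inord 1)).
move=> i; apply: val_inj; rewrite -(inord_val i).
case: i => [[|[|k]] hi] //=; rewrite ?inordK //; lia.
Qed.

Lemma det_minor2 (f : 'I_2 -> 'I_2) (g : 'I_2 -> I) :
  {homo f : i j / (i < j)%N >-> (i < j)%N} ->
  \det (mxsub f g (smallN K p)) = gg (g (inord 0)) (g (inord 1)).
Proof.
move=> hf.
have -> : mxsub f g (smallN K p) = \matrix_(i < 2, j < 2)
    (if val i == 0%N then @e K n (g (inord j)).+1 else @e K n (p + (g (inord j)).+1)).
  by apply/matrixP => i j; rewrite !mxE (homo2 hf) !inord_val.
by rewrite (det2f (fun i j => (if i == 0%N then @e K n (g (inord j)).+1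
                                 else @e K n (p + (g (inord j)).+1)))).
Qed.

Lemma gg_RHS (s t : I) : RHS (gg s t).
Proof.
have [R0 RD RM] := RHS_ideal.
have key : forall s t : I, (s < t)%N -> RHS (gg s t).
  move=> s0 t0 lt; apply: igS; left; apply: igS.
  exists (fun i => i), (fun i : 'I_2 => if val i == 0%N then s0 else t0); split => //.
    move=> i j /=; case: i => [[|[|?]] ?]; case: j => [[|[|?]] ?] //=.
  by rewrite det_minor2 // /= !inordK.
case: (ltngtP s t) => [hlt|hgt|heq].
- exact: key.
- have -> : gg s t = (-1) * gg t s by rewrite /gg; ring.
  by apply: (RM); apply: key.
- have -> : s = t by apply: val_inj.
  by rewrite /gg subrr.
Qed.

Lemma yy_RHS (s t : I) : RHS (y s * y t).
Proof.
apply: igS; right; apply: igS; exists (y s), (y t); split => //; apply: igS; by [exists s | exists t].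
Qed.

Lemma J0_RHS h : J0 h -> RHS h.
Proof.
apply: (ideal_min RHS_ideal) => q [[s [t ->]]|[s [t ->]]]; [exact: gg_RHS | exact: yy_RHS].
Qed.

Lemma LHS_RHS h : LHS h -> RHS h.
Proof.
apply: (ideal_min RHS_ideal) => q [f [If _ ->]].
have [g [d [Gg Ef]]] := LHS_rep hp If.
apply: J0_RHS; exact: (main_rep hp Gg Ef).
Qed.


Lemma h0n : (0 < n.-1)%N. Proof. lia. Qed.
Definition ion (k : nat) : 'I_(n.-1) := insubd (Ordinal h0n) k.
Lemma ion_val k : (k < n.-1)%N -> val (ion k) = k.
Proof. by move=> h; rewrite val_insubd h. Qed.

Definition g3 (c1 c2 : nat) (i : 'I_3) : 'I_(n.-1) :=
  ion (if val i == 0%N then 0%N else if val i == 1%N then c1 else c2).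

Lemma g3_homo c1 c2 : (0 < c1 < c2)%N -> (c2 < n.-1)%N ->
  {homo g3 c1 c2 : i j / (i < j)%N >-> (i < j)%N}.
Proof.
move=> h1 h2 i j; case: i => [[|[|[|?]]] ?]; case: j => [[|[|[|?]]] ?] //= _;
  rewrite /g3 /= !ion_val //; lia.
Qed.

Lemma minor_g3 c1 c2 : (0 < c1 < c2)%N -> (c2 < n.-1)%N ->
  \det (mxsub (fun i : 'I_3 => i) (g3 c1 c2) (bigM K p)) = MM c1 c2.
Proof.
move=> h1 h2.
rewrite (@det_minor3 K p hp (fun i => i) (g3 c1 c2)) //=.
have gE : forall k, (k < 3)%N ->
    nat_of_ord (g3 c1 c2 (inord k)) = (if k == 0%N then 0%N else if k == 1%N then c1 else c2).
  move=> k hk; rewrite /g3.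
  have -> : val (inord k : 'I_3) = k by exact: inordK.
  rewrite ion_val //; case: (k == 0%N) => //; case: (k == 1%N) => //; lia.
rewrite !gE //=.
case: (mcol0 K p) => -> E1 E2.
by rewrite /MM E1 E2; ring.
Qed.

Lemma initf0 : initf (0 : P) = 0.
Proof. by rewrite /initf raddf0. Qed.

Lemma yy_neq0 (s t : I) : y s * y t != 0.
Proof. by rewrite !(yE K hp) // -mpolyXD mpolyX_neq0. Qed.

Lemma initf_hh (s t : I) : initf (hh s t) = y s * y t.
Proof.
apply: (initf_split (f1 := kk K p s t) (d := 2%N)) => //.
- exact: yy_homog.
- exact: yy_neq0.
- exact: kk_Hge.
Qed.

Lemma gg_neq0 (s t : I) : (s < t)%N -> gg s t != 0.
Proof.
move=> lt; rewrite /gg !(xE K hp) // !(yE K hp) // -!mpolyXD.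
apply/eqP => /(congr1 (mcoeff (U_(io s) + U_(io (p + t)))%MM)).
rewrite mcoeffB !mcoeffX eqxx mcoeff0.
case: eqP => [/mnmP/(_ (io s))|_]; last by move/eqP; rewrite subr0 oner_eq0.
rewrite !mnmDE !mnm1E eqxx !eq_io ?io_val /=; try lia.
all: have hs := ltn_ord s; have ht := ltn_ord t; lia.
Qed.

Lemma initf_gg (s t : I) : (s < t)%N -> initf (gg s t) = gg s t.
Proof.
move=> lt; apply: (initf_split (f1 := 0) (d := 2%N)).
- by rewrite addr0.
- exact: gg_homog.
- exact: gg_neq0.
- exact: Hge0.
Qed.

Lemma hh_LHS (s t : I) : (s <= t)%N -> LHS (y s * y t).
Proof.
move=> le.
have hs := ltn_ord s; have ht := ltn_ord t.
have c1 : (0 < (s.*2).+1 < (t.*2).+2)%N by rewrite -!mul2n; lia.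
have c2 : ((t.*2).+2 < n.-1)%N by rewrite -!mul2n; lia.
apply: igS; exists (\det (mxsub (fun i : 'I_3 => i) (g3 (s.*2).+1 (t.*2).+2) (bigM K p))).
have EM : \det (mxsub (fun i : 'I_3 => i) (g3 (s.*2).+1 (t.*2).+2) (bigM K p)) = hh s t.
  rewrite minor_g3 // /MM.
  case: (colodd K p s) => _ -> ->; case: (coleven K p t) => _ -> ->.
  by rewrite /hh /kk; ring.
split.
- apply: igS; exists (fun i => i), (g3 (s.*2).+1 (t.*2).+2); split => //.
  exact: g3_homo.
- rewrite EM; apply/eqP => E; move: (initf_hh s t); rewrite E initf0 => /esym/eqP.
  by rewrite (negbTE (yy_neq0 s t)).
- by rewrite EM initf_hh.
Qed.

Lemma gg_LHS (s t : I) : (s < t)%N -> LHS (gg s t).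
Proof.
move=> lt.
have hs := ltn_ord s; have ht := ltn_ord t.
have c1 : (0 < (s.*2).+2 < (t.*2).+2)%N by rewrite -!mul2n; lia.
have c2 : ((t.*2).+2 < n.-1)%N by rewrite -!mul2n; lia.
apply: igS; exists (\det (mxsub (fun i : 'I_3 => i) (g3 (s.*2).+2 (t.*2).+2) (bigM K p))).
have EM : \det (mxsub (fun i : 'I_3 => i) (g3 (s.*2).+2 (t.*2).+2) (bigM K p)) = gg s t.
  rewrite minor_g3 // /MM.
  case: (coleven K p s) => _ -> ->; case: (coleven K p t) => _ -> ->.
  by rewrite /gg; ring.
split.
- apply: igS; exists (fun i => i), (g3 (s.*2).+2 (t.*2).+2); split => //.
  exact: g3_homo.
- by rewrite EM gg_neq0.
- by rewrite EM initf_gg.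
Qed.

Lemma yy_LHS (s t : I) : LHS (y s * y t).
Proof.
case: (leqP s t) => h; first exact: hh_LHS.
by rewrite mulrC; apply: hh_LHS; apply: ltnW.
Qed.

Lemma RHS_LHS h : RHS h -> LHS h.
Proof.
have [L0 LD LM] := LHS_ideal.
apply: (ideal_min LHS_ideal) => q [Hq|Hq].
  apply: (ideal_min LHS_ideal _ Hq) => q' [f [g [hf hg ->]]].
  rewrite det_minor2 //; apply: gg_LHS; apply: hg; by rewrite !inordK.
apply: (ideal_min LHS_ideal _ Hq) => q' [u [v [Lu Lv ->]]].
have HI : forall v0, is_ideal (fun u0 => LHS (u0 * v0)).
  move=> v0; split; first by rewrite mul0r.
    by move=> u1 u2 h1 h2; rewrite mulrDl; apply: (LD).
  by move=> c u1 h1; rewrite -mulrA; apply: (LM).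
apply: (ideal_min (HI v) _ Lu) => u0 [j ->].
have HI' : is_ideal (fun v0 => LHS (y j * v0)).
  split; first by rewrite mulr0.
    by move=> u1 u2 h1 h2; rewrite mulrDr; apply: (LD).
  by move=> c u1 h1; rewrite mulrCA; apply: (LM).
apply: (ideal_min HI' _ Lv) => v0 [k ->].
exact: yy_LHS.
Qed.

End SpecJ.

Theorem corollary7p2 (K : fieldType) (p : nat) (hp : (3 <= p)%N) :
  ideal_eq
    (initial_ideal (minors_ideal 3 (bigM K p)))
    (ideal_add (minors_ideal 2 (smallN K p))
               (ideal_mul (linideal K p) (linideal K p))).
Proof.
move=> h; split; [exact: (LHS_RHS hp) | exact: (RHS_LHS hp)].
Qed.
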